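(* Let $X$ be a Tychonoff space. The following are equivalent: (1) $X$ is dense-pseudocompact; (2) for every continuous function $f\colon X\to\mathbb{R}$, the range $f(X)$ is finite; (3) $X$ is finite; (4) $X$ is hereditarily pseudocompact (every subspace of $X$ is pseudocompact).
   Context: A space is pseudocompact if every continuous real-valued function on it is bounded. A space $X$ is dense-pseudocompact if every dense subset of $X$ (with the subspace topology) is pseudocompact. *)

(* Defs.v *)
From HB Require Import structures.
From mathcomp Require Import all_boot all_order all_algebra.
From mathcomp Require Import all_classical all_reals all_analysis.
Set Implicit Arguments. Unset Strict Implicit. Unset Printing Implicit Defensive.
Import Order.TTheory GRing.Theory Num.Theory.
Import numFieldTopology.Exports numFieldNormedType.Exports.
Local Open Scope classical_set_scope.
Local Open Scope ring_scope.

Definition tychonoff_space (R : realType) (X : topologicalType) : Prop :=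
  accessible_space X /\
  forall (x : X) (B : set X), closed B -> ~ B x ->
    exists f : X -> R, [/\ continuous f, f x = 0,
      (forall y, B y -> f y = 1) & (forall y, 0 <= f y <= 1)].

Definition pseudocompact_subspace (R : realType) (X : topologicalType)
  (A : set X) : Prop :=
  forall f : X -> R, {within A, continuous f} ->
    exists M : R, forall x, A x -> `|f x| <= M.

Definition dense_pseudocompact (R : realType) (X : topologicalType) : Prop :=
  forall D : set X, dense D -> pseudocompact_subspace R D.

Definition hereditarily_pseudocompact (R : realType) (X : topologicalType)
  : Prop := forall A : set X, pseudocompact_subspace R A.

(* Main.v *)
Require Import Defs.
From HB Require Import structures.
From mathcomp Require Import all_boot all_order all_algebra.
From mathcomp Require Import all_classical all_reals all_analysis.
Import Order.TTheory GRing.Theory Num.Theory.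
Import numFieldTopology.Exports numFieldNormedType.Exports.
Local Open Scope classical_set_scope.
Local Open Scope ring_scope.

Lemma fin_bounded (R : realType) (S : set R) : finite_set S ->
  exists M : R, forall x, S x -> `|x| <= M.
Proof.
move=> /finite_compact/compact_bounded.
rewrite /bounded_near => /pinfty_ex_gt0 [M M0 HM].
by exists M => x Sx; apply: HM.
Qed.

Lemma dense_setT (X : topologicalType) : dense [set: X].
Proof. by move=> O [x Ox] _; exists x. Qed.

Lemma partC (R : realType) (X : topologicalType) :
  dense_pseudocompact R X ->
  forall f : X -> R, continuous f -> finite_set (range f).
Proof.
move=> H1 f cf; apply: contrapT => inf.
have cT : {within setT, continuous f} by apply: continuous_subspaceT.
have [M HM] := H1 setT (@dense_setT X) f cT.
have bnd : bounded_set (range f).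
  rewrite /= /bounded_near; near=> N => y [x _ <-].
  apply: le_trans (HM x I) _; near: N; apply: nbhs_pinfty_ge.
  exact: num_real.
have [r lr] := infinite_bounded_limit_point_nonempty inf bnd.
pose E := f @^-1` [set r].
pose D := [set x | f x != r] `|` E°.
pose g := fun x => (f x - r)^-1.
have dD : dense D.
  move=> O [x Ox] oO; have [OE|] := pselect (O `<=` E).
    exists x; split => //; right.
    have : O° x by move: oO; rewrite openE; apply.
    exact: filterS OE.
  move=> /existsNP [y /not_implyP [Oy Ey]].
  by exists y; split => //; left; apply/eqP.
have cg : {within D, continuous g}.
  apply: continuous_in_subspaceT => x; rewrite inE => -[fxr|Ex].
    have fr0 : f x - r != 0 by rewrite subr_eq0.
    exact: (cvgV fr0 (cvgB (cf x) (cvg_cst r))).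
  apply: (@near_cst_continuous _ _ 0).
  apply: filterS Ex => y; rewrite /E /g /= => ->.
  by rewrite subrr invr0.
have [K HK] := H1 D dD g cg.
have Kp : 0 < (`|K| + 1)^-1 by rewrite invr_gt0 ltr_wpDl.
have [y [yr [x _ fxy] yb]] := lr _ (nbhsx_ballx r _ Kp).
have Dx : D x by left; rewrite /= fxy.
have := HK x Dx; rewrite /g; apply/negP; rewrite -ltNge.
move: yb; rewrite /ball /= -fxy => yb.
have d0 : 0 < `|f x - r| by rewrite normr_gt0 subr_eq0 fxy.
rewrite normfV (@le_lt_trans _ _ (`|K| + 1)) //.
  by rewrite ler_wpDr // ler_norm.
rewrite distrC in yb.
by rewrite -[`|K| + 1]invrK ltf_pV2 ?posrE.
Unshelve. all: by end_near.
Qed.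

Lemma clopen_sep (R : realType) (X : topologicalType) :
  tychonoff_space R X ->
  (forall f : X -> R, continuous f -> finite_set (range f)) ->
  forall a b : X, a != b -> exists U : set X, [/\ open U, closed U, U a & ~ U b].
Proof.
move=> [T1 CR] H2 a b ab.
have cb : closed [set b] by apply: accessible_closed_set1.
have nb : ~ [set b] a by move=> /= ab'; rewrite ab' eqxx in ab.
have [f [cf fa fb _]] := CR a [set b] cb nb.
have RT1 : accessible_space R by apply: hausdorff_accessible; apply: Rhausdorff.
have finC := (@accessible_finite_set_closed R).1 RT1.
exists (f @^-1` [set 0]); split => //.
- pose W := f @^-1` (range f `\ 0).
  have -> : f @^-1` [set 0] = ~` W.
    apply/seteqP; split => y /=.
      by move=> fy0 [_ []].
    move=> /not_andP [|]; first by move=> []; exists y.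
    by move=> /contrapT.
  apply: closed_openC; apply: preimage_closed.
    by move=> y _; apply: cf.
  apply: finC; apply: (@sub_finite_set _ _ (range f)); last exact: H2.
  by move=> z [].
- apply: preimage_closed; first by move=> y _; apply: cf.
  exact: finC (finite_set1 _).
- by rewrite /= fb // => /eqP; rewrite oner_eq0.
Qed.

Lemma partD (R : realType) (X : topologicalType) :
  (forall a b : X, a != b -> exists U : set X, [/\ open U, closed U, U a & ~ U b]) ->
  (forall f : X -> R, continuous f -> finite_set (range f)) -> finite_set [set: X].
Proof.
move=> sep H2; apply: contrapT => infX.
pose P (Y : set X) := [/\ open Y, closed Y & infinite_set Y].
have step : forall Y, exists Y', P Y -> [/\ P Y', Y' `<=` Y & exists x, Y x /\ ~ Y' x].
  move=> Y; have [[oY cY iY]|nP] := pselect (P Y); last by exists Y.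
  have [a Ya] := infinite_setN0 iY.
  have [b [Yb ba]] := infinite_setN0 (infinite_setD iY (finite_set1 a)).
  have ab : a != b by apply/eqP => ab; apply: ba; rewrite ab.
  have [U [oU cU Ua Ub]] := sep a b ab.
  have YU : Y = (Y `&` U) `|` (Y `&` ~` U).
    apply/seteqP; split => y /=; last by case=> -[].
    by move=> Yy; have [Uy|nUy] := pselect (U y); [left|right].
  have [fin|inf] := pselect (finite_set (Y `&` U)).
    exists (Y `&` ~` U) => _; split.
    - split; first exact: openI oY (closed_openC cU).
        exact: closedI cY (open_closedC oU).
      move=> fin2; apply: iY; rewrite YU finite_setU; split => //.
    - by move=> y [].
    - by exists a; split => // -[].
  exists (Y `&` U) => _; split.
  - by split; [exact: openI|exact: closedI|].
  - by move=> y [].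
  - by exists b; split => // -[].
have [st Hst] := choice step.
pose Xn n := iter n st setT.
have PX : forall n, P (Xn n).
  elim=> [|n IH]; first by split; [exact: openT|exact: closedT|exact: infX].
  by have [] := Hst (Xn n) IH.
have decS : forall n, Xn n.+1 `<=` Xn n by move=> n; have [] := Hst (Xn n) (PX n).
have dec : forall n k, Xn (n + k)%N `<=` Xn n.
  move=> n; elim=> [|k IH]; first by rewrite addn0.
  by rewrite addnS => y /decS /IH.
have decle : forall n m, (n <= m)%N -> Xn m `<=` Xn n.
  by move=> n m nm; rewrite -(subnKC nm); apply: dec.
pose V n := Xn n `&` ~` Xn n.+1.
have Vne : forall n, exists x, V n x.
  by move=> n; have [_ _ [x [? ?]]] := Hst (Xn n) (PX n); exists x.
have Vuniq : forall n m x, V n x -> V m x -> n = m.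
  move=> n m x [Xnx nXn] [Xmx nXm]; case: (ltngtP n m) => // nm.
    by exfalso; apply: nXn; apply: (decle n.+1 m) => //.
  by exfalso; apply: nXm; apply: (decle m.+1 n) => //.
have Vopen : forall n, open (V n).
  by move=> n; apply: openI; [case: (PX n)|apply: closed_openC; case: (PX n.+1)].
pose g (x : X) : R := if pselect (exists n, V n x) is left h
  then ((projT1 (cid h)).+1%:R)^-1 else 0.
have gV : forall n x, V n x -> g x = (n.+1%:R)^-1.
  move=> n x Vx; rewrite /g; case: pselect => [h|]; last by move=> []; exists n.
  by rewrite (Vuniq _ _ _ (projT2 (cid h)) Vx).
have gN : forall x, ~ (exists n, V n x) -> g x = 0.
  by move=> x nV; rewrite /g; case: pselect.
have allX : forall x, ~ (exists n, V n x) -> forall n, Xn n x.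
  move=> x nV; elim=> [//|n IH].
  by apply: contrapT => nX; apply: nV; exists n.
have cg : continuous g.
  move=> x; have [[n Vx]|nV] := pselect (exists n, V n x).
    apply: (@near_cst_continuous _ _ (g x)).
    have : nbhs x (V n) by apply: open_nbhs_nbhs; split.
    by apply: filterS => y Vy; rewrite (gV _ _ Vy) (gV _ _ Vx).
  apply/cvgrPdist_lt => e e0.
  pose N := Num.truncn e^-1.
  have hN : e^-1 < N.+1%:R by apply: truncnS_gt.
  have : nbhs x (Xn N).
    by apply: open_nbhs_nbhs; split; [case: (PX N)|apply: allX].
  apply: filterS => y XNy; rewrite (gN _ nV) sub0r normrN.
  have [[m Vy]|nVy] := pselect (exists m, V m y); last by rewrite gN ?normr0.
  rewrite (gV _ _ Vy).
  have Nm : (N <= m)%N.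
    rewrite leqNgt; apply/negP => mN; case: Vy => _; apply.
    exact: (decle m.+1 N).
  rewrite ger0_norm ?invr_ge0 ?ler0n //.
  apply: (@le_lt_trans _ _ (N.+1%:R)^-1).
    by rewrite lef_pV2 ?posrE ?ltr0n // ler_nat.
  by rewrite -[e]invrK ltf_pV2 ?posrE ?invr_gt0 ?ltr0n.
apply: infinite_nat.
pose h (v : R) := (Num.truncn v^-1).-1.
apply: (@sub_finite_set _ _ (h @` range g)); last exact/finite_image/H2.
move=> n _; have [x Vx] := Vne n; exists (g x); first by exists x.
by rewrite /h (gV _ _ Vx) invrK natrK.
Qed.

Lemma fin_hered (R : realType) (X : topologicalType) :
  finite_set [set: X] -> hereditarily_pseudocompact R X.
Proof.
move=> fX A f _.
have [M HM] := @fin_bounded R _ (finite_image (A := [set: X]) f fX).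
by exists M => x _; apply: HM; exists x.
Qed.

Theorem theorem3p3 (R : realType) (X : topologicalType) :
  tychonoff_space R X ->
  (dense_pseudocompact R X <->
     (forall f : X -> R, continuous f -> finite_set (range f)))
  /\ ((forall f : X -> R, continuous f -> finite_set (range f)) <->
        finite_set [set: X])
  /\ (finite_set [set: X] <-> hereditarily_pseudocompact R X).
Proof.
move=> tX.
have h23 : (forall f : X -> R, continuous f -> finite_set (range f)) -> finite_set [set: X] := fun H2 => @partD R X (@clopen_sep R X tX H2) H2.
have h32 : finite_set [set: X] ->
    forall f : X -> R, continuous f -> finite_set (range f).
  by move=> fX f _; apply: finite_image.
have h41 : hereditarily_pseudocompact R X -> dense_pseudocompact R X.
  by move=> H D _; apply: H.
split; [split|split; split].
- exact: partC.
- by move=> H2; apply/h41/fin_hered/h23.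
- exact: h23.
- exact: h32.
- exact: fin_hered.
- move=> H4; apply: h23; apply: partC; exact: h41.
Qed.
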